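(* Let $1\le k<n$ and let $T\colon\mathbb{H}_n\to\mathbb{H}_n$ be a bijective $\mathbb{R}$-linear map. Suppose $P_1,P_2$ are rank-$k$ orthogonal projections with $\operatorname{span}_{\mathbb{R}}S^{\mathbb{H}}(P_1)\neq\operatorname{span}_{\mathbb{R}}S^{\mathbb{H}}(P_2)$, and let $\theta_1,\theta_2\in\{-1,1\}$. Then there do not exist a rank-$k$ orthogonal projection $Q$ and $\theta_3\in\{-1,1\}$ such that $T(\theta_1S^{\mathbb{H}}(P_1))\cup T(\theta_2S^{\mathbb{H}}(P_2))\subseteq\theta_3S^{\mathbb{H}}(Q)$.
   Context: $\mathbb{H}_n$ is the real space of $n\times n$ Hermitian matrices. $w_k(A)=\max\{|\operatorname{tr}(AP)|: P=P^*=P^2,\operatorname{tr}P=k\}$. For a rank-$k$ orthogonal projection $P$, $S^{\mathbb{H}}(P)=\{B\in\mathbb{H}_n:\operatorname{tr}(BP)=w_k(B)\}$. *)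

(* Defs.v *)
From mathcomp Require Import all_boot all_algebra.
From mathcomp Require Import all_classical all_reals.
From mathcomp.real_closed Require Import complex.
Set Implicit Arguments. Unset Strict Implicit. Unset Printing Implicit Defensive.
Import GRing.Theory Num.Theory.
Local Open Scope ring_scope.
Local Open Scope classical_set_scope.

Section Defs.
Variables (R : realType) (n : nat).
Local Notation C := (R[i]).
Local Notation M := ('M[C]_n).

Definition adjmx (A : M) : M := (map_mx (@conjc R) A)^T.

Definition hermitian (A : M) : Prop := adjmx A = A.

Definition rC (r : R) : C := Complex r 0.

Definition rank_proj (k : nat) (P : M) : Prop :=
  adjmx P = P /\ P *m P = P /\ \tr P = (k%:R : C).

Definition wk (k : nat) (A : M) : R :=
  sup [set Normc.normc (\tr (A *m P)) | P in [set P | rank_proj k P]].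

Definition SH (k : nat) (P : M) : set M :=
  [set B | hermitian B /\ \tr (B *m P) = rC (wk k B)].

Definition spanR (S : set M) : set M :=
  [set A | exists (m : nat) (r : 'I_m -> R) (B : 'I_m -> M),
     (forall i, S (B i)) /\ A = \sum_(i < m) rC (r i) *: B i].

Definition scaleset (t : R) (S : set M) : set M := [set rC t *: B | B in S].

(* T : H_n -> H_n is a bijective R-linear map (T is given on all matrices,
   only its behaviour on H_n matters) *)
Definition herm_linear_bij (T : M -> M) : Prop :=
  (forall A, hermitian A -> hermitian (T A)) /\
  (forall A B, hermitian A -> hermitian B -> T (A + B) = T A + T B) /\
  (forall (r : R) A, hermitian A -> T (rC r *: A) = rC r *: T A) /\
  (forall A B, hermitian A -> hermitian B -> T A = T B -> A = B) /\
  (forall B, hermitian B -> exists A, hermitian A /\ T A = B).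
End Defs.

(* Main.v *)
Require Import Defs.
From mathcomp Require Import all_boot all_algebra all_fingroup.
From mathcomp Require Import all_classical all_reals.
From mathcomp.real_closed Require Import complex.
From mathcomp Require Import spectral zify.
Import GRing.Theory Num.Theory.
Local Open Scope ring_scope.
Local Open Scope classical_set_scope.

Section Vec.
Variables (K : fieldType) (V : vectType K).

Lemma sub_sum_closed (Z : set V) :
  Z 0 -> (forall a u v, Z u -> Z v -> Z (a *: u + v)) ->
  forall m (k : 'I_m -> K) (x : 'I_m -> V), (forall i, Z (x i)) ->
  Z (\sum_(i < m) k i *: x i).
Proof.
move=> Z0 Zl; elim=> [|m IH] k x Zx; first by rewrite big_ord0.
rewrite big_ord_recr /= addrC; apply: Zl => //.
exact: IH.
Qed.

Lemma set2vspace (Z : set V) :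
  Z 0 -> (forall a u v, Z u -> Z v -> Z (a *: u + v)) ->
  exists U : {vspace V}, forall v, v \in U <-> Z v.
Proof.
move=> Z0 Zl.
pose P m := `[< exists s : seq V, (forall x, x \in s -> Z x) /\ \dim <<s>>%VS = m >].
have P0 : P 0%N by apply/asboolP; exists [::]; split => //; rewrite span_nil dimv0.
have Pb : forall m, P m -> (m <= \dim (fullv : {vspace V}))%N.
  by move=> m /asboolP [s [_ <-]]; apply: dimvS; apply: subvf.
have [m Pm Pmax] := ex_maxnP (ex_intro _ 0%N P0) Pb.
move/asboolP: Pm => [s [sZ sdim]].
exists <<s>>%VS => v; split.
  move=> vs; have -> := @coord_span _ _ (size s) (in_tuple s) v vs.
  apply: sub_sum_closed => // i.
  by apply: sZ; apply: mem_nth.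
move=> Zv; apply/negPn/negP => vNs.
have : P (\dim <<v :: s>>%VS).
  apply/asboolP; exists (v :: s); split => //.
  by move=> x; rewrite inE => /orP [/eqP -> //|]; apply: sZ.
move/Pmax; rewrite -sdim.
have sub1 : (<<s>> <= <<v :: s>>)%VS by apply: sub_span => x xs; rewrite inE xs orbT.
rewrite leqNgt (ltn_leqif (dimv_leqif_sup sub1)) => /negP; apply.
apply/negP => /subvP /(_ v (memv_span (mem_head _ _))); exact/negP.
Qed.

Lemma dim_transfer (H X Y : {vspace V}) (g : V -> V) :
  (X <= H)%VS ->
  (forall a u v, u \in H -> v \in H -> g (a *: u + v) = a *: g u + g v) ->
  (forall u v, u \in H -> v \in H -> g u = g v -> u = v) ->
  (forall x, x \in X -> g x \in Y) ->
  (\dim X <= \dim Y)%N /\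
  ((\dim Y <= \dim X)%N -> forall y, y \in Y -> exists2 x, x \in X & g x = y).
Proof.
move=> XH gl ginj gXY.
have g0 : g 0 = 0.
  have := gl (-1) 0 0 (mem0v _) (mem0v _).
  by rewrite scaler0 addr0 scaleN1r addNr.
have gsum : forall m (k : 'I_m -> K) (x : 'I_m -> V), (forall i, x i \in H) ->
    g (\sum_(i < m) k i *: x i) = \sum_(i < m) k i *: g (x i).
  elim=> [|m IH] k x xH; first by rewrite !big_ord0.
  rewrite !big_ord_recr /= addrC gl //; last first.
    by apply: memv_suml => i _; apply: memvZ.
  by rewrite IH // addrC.
set b := vbasis X.
have bX : forall i, b`_i \in X.
  move=> i; case: (ltnP i (size b)) => ib; first by apply/vbasis_mem/mem_nth.
  by rewrite nth_default // mem0v.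
have bH : forall i, b`_i \in H by move=> i; apply: (subvP XH).
pose gb := [tuple of map g b].
have gbE : forall i : 'I_(\dim X), gb`_i = g b`_i.
  by move=> i; rewrite (nth_map 0) // size_tuple.
have freegb : free gb.
  apply/freeP => k sk0 i.
  have : g (\sum_(i < \dim X) k i *: b`_i) = g 0.
    rewrite gsum // g0 -[RHS]sk0; apply: eq_bigr => j _; by rewrite gbE.
  have sH : \sum_(i < \dim X) k i *: b`_i \in H.
    by apply: memv_suml => j _; apply: memvZ.
  move/ginj => /(_ sH (mem0v _)) => sb0.
  by move/freeP: (basis_free (vbasisP X)) => /(_ k sb0 i).
have spY : (<<gb>> <= Y)%VS.
  apply/span_subvP => y /mapP [x xb ->]; apply: gXY; exact: vbasis_mem.
have dimgb : \dim <<gb>>%VS = \dim X by rewrite (eqnP freegb) size_tuple.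
split; first by rewrite -dimgb; apply: dimvS.
move=> leYX y yY.
have bY : basis_of Y gb by rewrite basisEfree freegb spY size_tuple.
move: yY; rewrite -(span_basis bY) => /coord_span ->.
exists (\sum_(i < \dim X) coord gb i y *: b`_i).
  by apply: memv_suml => i _; apply: memvZ.
rewrite gsum //; apply: eq_bigr => i _; by rewrite gbE.
Qed.

End Vec.

Lemma count01 (T : eqType) (x y : T) : x != y -> forall s : seq T,
  all (fun z => (z == x) || (z == y)) s -> forall a : pred T,
  count a s = (a x * count_mem x s + a y * (size s - count_mem x s))%N.
Proof.
move=> xy; elim=> [|z s IH] /=; first by move=> _ a; rewrite !muln0.
move=> /andP [hz hs] a.
rewrite IH //; have := count_size (pred1 x) s.
case/orP: hz => /eqP ->; rewrite ?eqxx /=.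
  by case: (a x); case: (a y) => /=; lia.
rewrite eq_sym (negPf xy) /=.
by case: (a x); case: (a y) => /=; lia.
Qed.

Lemma perm01 (T : eqType) (x y : T) n (f g : 'I_n -> T) : x != y ->
  (forall i, (f i == x) || (f i == y)) -> (forall i, (g i == x) || (g i == y)) ->
  count_mem x [tuple f i | i < n] = count_mem x [tuple g i | i < n] ->
  exists s : 'S_n, forall i, g i = f (s i).
Proof.
move=> xy hf hg hc.
have allt : forall h : 'I_n -> T, (forall i, (h i == x) || (h i == y)) ->
    all (fun z => (z == x) || (z == y)) [tuple h i | i < n].
  move=> h hh; apply/(all_nthP x) => i; rewrite size_tuple => lt_in.
  by rewrite (nth_mktuple h x (Ordinal lt_in)).
have pe : perm_eq [tuple g i | i < n] [tuple f i | i < n].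
  apply/seq.permP => a.
  rewrite (count01 _ _ _ xy _ (allt g hg) a) (count01 _ _ _ xy _ (allt f hf) a).
  by rewrite !size_tuple hc.
have [p hp] := tuple_permP pe.
exists p => i.
have := congr1 (fun s => nth x s i) hp.
by rewrite !nth_mktuple tnth_mktuple.
Qed.

Lemma sum01 (F : nzRingType) (s : seq F) :
  all (fun z => (z == 0) || (z == 1)) s -> \sum_(z <- s) z = (count_mem 1 s)%:R.
Proof.
elim: s => [|z s IH] /=; first by rewrite big_nil.
case/andP => /orP [] /eqP -> hs; rewrite big_cons IH //.
  by rewrite eq_sym oner_eq0 add0r.
by rewrite eqxx natrD.
Qed.

Lemma conjCE (R : realType) (x : R[i]) : Num.conj x = @conjc R x.
Proof.
rewrite {1}[x]complexE complexRe complexIm complexiE conjC_rect ?Creal_Re ?Creal_Im //.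
rewrite -complexRe -complexIm -complexiE.
case: x => a b /=.
rewrite /GRing.mul /GRing.add /GRing.opp /=; congr Complex; rewrite /=.
  by rewrite !mul0r mul1r !subr0.
rewrite !mul0r mul1r. change (0 - (0 + b) = - b :> R). by rewrite !add0r.
Qed.


Section Main.
Variables (R : realType) (n : nat).
Local Notation C := (R[i]).
Local Notation M := ('M[C]_n).
Local Notation herm := (@Defs.hermitian R n).

Lemma rCE (r : R) : rC r = (r%:C)%C. Proof. by []. Qed.

Lemma conjcM (x y : C) : @conjc R (x * y) = @conjc R x * @conjc R y.
Proof. exact: rmorphM. Qed.
Lemma conjcD (x y : C) : @conjc R (x + y) = @conjc R x + @conjc R y.
Proof. exact: rmorphD. Qed.

Lemma conjcN (m : nat) : @conjc R (m%:R) = m%:R.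
Proof. exact: conjc_nat. Qed.

Lemma rCM (a b : R) : rC (a * b) = rC a * rC b.
Proof. by rewrite /rC /GRing.mul /=; congr Complex; rewrite ?mulr0 ?mul0r ?subr0 ?addr0. Qed.

Lemma rC1 : rC (R:=R) 1 = 1. Proof. by []. Qed.

Lemma conjc_rC (r : R) : @conjc R (rC r) = rC r.
Proof. by rewrite rCE conjc_real. Qed.

Lemma adjmxK (A : M) : adjmx (adjmx A) = A.
Proof. by apply/matrixP=> i j; rewrite !mxE conjcK. Qed.

Lemma adjmxD (A B : M) : adjmx (A + B) = adjmx A + adjmx B.
Proof. by apply/matrixP=> i j; rewrite !mxE conjcD. Qed.

Lemma adjmxZ (r : R) (A : M) : adjmx (rC r *: A) = rC r *: adjmx A.
Proof. apply/matrixP=> i j; rewrite !mxE; apply: (etrans (conjcM _ _)); by rewrite conjc_rC. Qed.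

Lemma adjmxM (A B : M) : adjmx (A *m B) = adjmx B *m adjmx A.
Proof.
apply/matrixP=> i j; rewrite !mxE rmorph_sum; apply: eq_bigr => l _ /=.
by rewrite !mxE; apply: (etrans (conjcM _ _)); rewrite mulrC.
Qed.

Lemma adjmx1 : adjmx (1%:M : M) = 1%:M.
Proof. apply/matrixP=> i j; rewrite !mxE; apply: (etrans (conjcN _)); by rewrite eq_sym. Qed.

Lemma adjmx0 : adjmx (0 : M) = 0.
Proof. by apply/matrixP=> i j; rewrite !mxE (conjcN 0). Qed.

Lemma herm0 : herm (0 : M). Proof. exact: adjmx0. Qed.

Lemma hermD (A B : M) : herm A -> herm B -> herm (A + B).
Proof. by rewrite /Defs.hermitian adjmxD => -> ->. Qed.

Lemma hermZ (r : R) (A : M) : herm A -> herm (rC r *: A).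
Proof. by rewrite /Defs.hermitian adjmxZ => ->. Qed.

Lemma span0 (S : set M) : spanR S 0.
Proof. by exists 0%N, (fun _ => 0), (fun _ => 0); split => [[]//|]; rewrite big_ord0. Qed.

Lemma spanS (S : set M) B : S B -> spanR S B.
Proof.
move=> SB; exists 1%N, (fun _ => 1), (fun _ => B); split => //.
by rewrite big_ord1 scale1r.
Qed.

Lemma spanZ (S : set M) (a : R) B : spanR S B -> spanR S (rC a *: B).
Proof.
case=> m [r [F [SF ->]]]; exists m, (fun i => a * r i), F; split => //.
rewrite scaler_sumr; apply: eq_bigr => i _.
by rewrite scalerA rCM.
Qed.

Lemma spanD (S : set M) A B : spanR S A -> spanR S B -> spanR S (A + B).
Proof.
case=> m1 [r1 [F1 [SF1 ->]]]; case=> m2 [r2 [F2 [SF2 ->]]].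
exists (m1 + m2)%N, (fun i => match fintype.split i with inl j => r1 j | inr j => r2 j end),
  (fun i => match fintype.split i with inl j => F1 j | inr j => F2 j end); split.
  by move=> i; case: fintype.split.
rewrite big_split_ord /=; congr (_ + _); apply: eq_bigr => i _.
  by rewrite (unsplitK (inl _ i)).
by rewrite (unsplitK (inr _ i)).
Qed.

Lemma span_herm (S : set M) : (forall B, S B -> herm B) ->
  forall A, spanR S A -> herm A.
Proof.
move=> SH A [m [r [F [SF ->]]]]; elim/big_ind: _ => //.
- exact: herm0.
- exact: hermD.
- by move=> i _; apply/hermZ/SH.
Qed.

Definition VV := ('M[R]_n * 'M[R]_n)%type.
Definition ee (A : M) : VV := (map_mx (@complex.Re R) A, map_mx (@complex.Im R) A).
Definition dd (v : VV) : M := \matrix_(i, j) Complex (v.1 i j) (v.2 i j).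

Lemma ddK A : dd (ee A) = A.
Proof. by apply/matrixP => i j; rewrite !mxE; case: (A i j). Qed.

Lemma eeK v : ee (dd v) = v.
Proof. by case: v => a b; congr pair; apply/matrixP => i j; rewrite !mxE. Qed.

Lemma dd_lin (a : R) (u v : VV) : dd (a *: u + v) = rC a *: dd u + dd v.
Proof.
apply/matrixP => i j; rewrite !mxE /=.
case: u v => [u1 u2] [v1 v2] /=.
by rewrite /rC /GRing.mul /GRing.add /=; congr Complex; rewrite ?mul0r ?subr0 ?addr0.
Qed.

Lemma dd0 : dd 0 = 0.
Proof. by apply/matrixP => i j; rewrite !mxE. Qed.

Lemma mat2vspace (Z : set M) : Z 0 ->
  (forall a A B, Z A -> Z B -> Z (rC a *: A + B)) ->
  exists U : {vspace VV}, forall v, v \in U <-> Z (dd v).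
Proof.
move=> Z0 Zl; apply: (@set2vspace R [the vectType R of VV] (fun v => Z (dd v))).
  by rewrite dd0.
by move=> a u v Zu Zv; rewrite dd_lin; apply: Zl.
Qed.

Definition unitaryW (W : M) := W *m adjmx W = 1%:M /\ adjmx W *m W = 1%:M.
Definition conjW (W A : M) := W *m A *m adjmx W.

Lemma unitary_adj W : unitaryW W -> unitaryW (adjmx W).
Proof. by case=> h1 h2; split; rewrite adjmxK. Qed.

Lemma conjW_mul W A B : unitaryW W -> conjW W A *m conjW W B = conjW W (A *m B).
Proof.
case=> h1 h2; rewrite /conjW !mulmxA -[W *m A *m adjmx W *m W]mulmxA h2 mulmx1.
by [].
Qed.

Lemma tr_conjW W A : unitaryW W -> \tr (conjW W A) = \tr A.
Proof. by case=> h1 h2; rewrite /conjW mxtrace_mulC mulmxA h2 mul1mx. Qed.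

Lemma conjWK W A : unitaryW W -> conjW (adjmx W) (conjW W A) = A.
Proof.
case=> h1 h2; rewrite /conjW adjmxK !mulmxA h2 mul1mx -mulmxA h2 mulmx1 //.
Qed.

Lemma adj_conjW W A : adjmx (conjW W A) = conjW W (adjmx A).
Proof. by rewrite /conjW !adjmxM adjmxK mulmxA. Qed.

Lemma rank_proj_conj k W P : unitaryW W -> rank_proj k P -> rank_proj k (conjW W P).
Proof.
move=> uW [h1 [h2 h3]]; split; first by rewrite adj_conjW h1.
by split; [rewrite conjW_mul // h2 | rewrite tr_conjW].
Qed.

Lemma wk_conj k W B : unitaryW W -> wk k (conjW W B) = wk k B.
Proof.
move=> uW; rewrite /wk; congr sup; apply/seteqP; split => x /=.
  case=> P PP <-; exists (conjW (adjmx W) P).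
    by apply: rank_proj_conj => //; apply: unitary_adj.
  by rewrite -{2}(conjWK (adjmx W) P (unitary_adj _ uW)) adjmxK conjW_mul // tr_conjW.
case=> P PP <-; exists (conjW W P); first exact: rank_proj_conj.
by rewrite conjW_mul // tr_conjW.
Qed.

Lemma SH_conj k W P B : unitaryW W -> SH k P B -> SH k (conjW W P) (conjW W B).
Proof.
move=> uW [hB trB]; split; first by rewrite /Defs.hermitian adj_conjW hB.
rewrite conjW_mul // tr_conjW // trB; congr rC; symmetry; exact: wk_conj.
Qed.

Lemma span_conj k W P A : unitaryW W -> spanR (SH k P) A ->
  spanR (SH k (conjW W P)) (conjW W A).
Proof.
move=> uW [m [r [F [SF ->]]]]; exists m, r, (fun i => conjW W (F i)); split.
  by move=> i; apply: SH_conj.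
rewrite /conjW mulmx_sumr mulmx_suml; apply: eq_bigr => i _.
by rewrite -scalemxAr -scalemxAl.
Qed.

Lemma tstar_adj (A : M) : map_mx Num.conj (A^T) = adjmx A.
Proof. by apply/matrixP => i j; rewrite !mxE conjCE. Qed.

Lemma proj_normal (P : M) : adjmx P = P -> P \is normalmx.
Proof. by move=> hP; apply/normalmxP; rewrite tstar_adj hP. Qed.

Lemma proj_diag k (P : M) : rank_proj k P -> exists (X : M) (d : 'rV[C]_n),
  unitaryW X /\ P = conjW X (diag_mx d) /\ (forall i, d 0 i = 0 \/ d 0 i = 1)
  /\ \sum_i d 0 i = k%:R.
Proof.
move=> [h1 [h2 h3]].
have /orthomx_spectralP Pe := proj_normal _ h1.
set U := spectralmx P in Pe; set d := spectral_diag P in Pe.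
have uU : U \is unitarymx by apply: spectral_unitarymx.
have UU : U *m adjmx U = 1%:M by rewrite -tstar_adj; apply/unitarymxP.
have UU' : adjmx U *m U = 1%:M by apply: mulmx1C.
have uX : unitaryW (adjmx U) by split; rewrite adjmxK.
have PX : P = conjW (adjmx U) (diag_mx d).
  by rewrite {1}Pe invmx_unitary // tstar_adj /conjW adjmxK.
have DX : diag_mx d = conjW U P.
  by rewrite PX -{1}[U]adjmxK conjWK.
exists (adjmx U), d; split => //; split => //; split.
  move=> i.
  have uU' : unitaryW U by split.
  have DD : diag_mx d *m diag_mx d = diag_mx d by rewrite DX conjW_mul // h2.
  have /matrixP /(_ i i) := DD; rewrite mul_diag_mx !mxE eqxx mulr1n => dd.
  have : d 0 i * (d 0 i - 1) = 0 by rewrite mulrBr mulr1 dd subrr.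
  move/eqP; rewrite mulf_eq0 subr_eq0 => /orP [/eqP|/eqP]; [left|right] => //.
have uU' : unitaryW U by split.
by rewrite -mxtrace_diag DX tr_conjW.
Qed.


Lemma conjW_comp (A B Y : M) : conjW A (conjW B Y) = conjW (A *m B) Y.
Proof. by rewrite /conjW adjmxM !mulmxA. Qed.

Lemma unitaryM (A B : M) : unitaryW A -> unitaryW B -> unitaryW (A *m B).
Proof.
case=> a1 a2 [b1 b2]; rewrite /unitaryW adjmxM; split.
  by rewrite mulmxA -(mulmxA A) b1 mulmx1 a1.
by rewrite mulmxA -(mulmxA (adjmx B)) a2 mulmx1 b2.
Qed.

Lemma count_sum (d : 'rV[C]_n) : (forall i, d 0 i = 0 \/ d 0 i = 1) ->
  \sum_i d 0 i = (count_mem 1 [tuple d 0 i | i < n])%:R.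
Proof.
move=> hd; rewrite -sum01.
  by rewrite big_tuple; apply: eq_bigr => i _; rewrite tnth_mktuple.
apply/(all_nthP 0) => i; rewrite size_tuple => lt_in.
by rewrite (nth_mktuple _ 0 (Ordinal lt_in)); case: (hd (Ordinal lt_in)) => ->;
  rewrite eqxx ?orbT.
Qed.

Lemma adj_perm (s : 'S_n) : adjmx (perm_mx s : M) = (perm_mx s)^T.
Proof. by apply/matrixP => i j; rewrite !mxE conjcN. Qed.

Lemma proj_equiv k (P Q : M) : rank_proj k P -> rank_proj k Q ->
  exists W, unitaryW W /\ Q = conjW W P.
Proof.
move=> hP hQ.
have [X1 [d1 [u1 [e1 [b1 s1]]]]] := proj_diag _ _ hP.
have [X2 [d2 [u2 [e2 [b2 s2]]]]] := proj_diag _ _ hQ.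
have [s hs] : exists s : 'S_n, forall i, d2 0 i = d1 0 (s i).
  apply: (@perm01 _ 1 0) => [|i|i|]; first by rewrite oner_eq0.
  - by case: (b1 i) => ->; rewrite eqxx ?orbT.
  - by case: (b2 i) => ->; rewrite eqxx ?orbT.
  apply/eqP; rewrite -(eqr_nat C) -!count_sum // s1 s2 //.
set Pi : M := perm_mx s.
have uPi : unitaryW Pi.
  rewrite /unitaryW /Pi adj_perm tr_perm_mx -!perm_mxM mulgV mulVg perm_mx1.
  by [].
have D2E : diag_mx d2 = conjW Pi (diag_mx d1).
  rewrite /conjW /Pi adj_perm tr_perm_mx -row_permE -col_permE.
  apply/matrixP => i j; rewrite !mxE hs (inj_eq perm_inj).
  by case: eqP => [->|].
exists (X2 *m Pi *m adjmx X1); split.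
  by apply: unitaryM; [apply: unitaryM|apply: unitary_adj].
by rewrite e2 D2E e1 !conjW_comp -(mulmxA _ (adjmx X1) X1) (proj2 u1) mulmx1.
Qed.

Lemma SH_herm k P B : SH k P B -> herm B.
Proof. by case. Qed.

Lemma spanL (S : set M) a A B : spanR S A -> spanR S B -> spanR S (rC a *: A + B).
Proof. by move=> hA hB; apply: spanD => //; apply: spanZ. Qed.

Lemma hermL a (A B : M) : herm A -> herm B -> herm (rC a *: A + B).
Proof. by move=> hA hB; apply: hermD => //; apply: hermZ. Qed.

Lemma span_vs k P : exists U : {vspace VV},
  forall v, v \in U <-> spanR (SH k P) (dd v).
Proof. apply: mat2vspace; [exact: span0 | move=> *; exact: spanL]. Qed.

Lemma herm_vs : exists U : {vspace VV}, forall v, v \in U <-> herm (dd v).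
Proof. apply: mat2vspace; [exact: herm0 | move=> *; exact: hermL]. Qed.

Lemma ee_lin a (A B : M) : ee (rC a *: A + B) = a *: ee A + ee B.
Proof. by rewrite -{1}(ddK A) -{1}(ddK B) -dd_lin eeK. Qed.

Lemma ee_inj (A B : M) : ee A = ee B -> A = B.
Proof. by move=> h; rewrite -(ddK A) h ddK. Qed.

Lemma dd_inj (u v : VV) : dd u = dd v -> u = v.
Proof. by move=> h; rewrite -(eeK u) h eeK. Qed.

Lemma conjW_lin W a (A B : M) :
  conjW W (rC a *: A + B) = rC a *: conjW W A + conjW W B.
Proof. by rewrite /conjW mulmxDr mulmxDl -scalemxAr -scalemxAl. Qed.

Lemma dim_conj k P W (UP UQ : {vspace VV}) (Hv : {vspace VV}) :
  unitaryW W ->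
  (forall v, v \in Hv <-> herm (dd v)) ->
  (forall v, v \in UP <-> spanR (SH k P) (dd v)) ->
  (forall v, v \in UQ <-> spanR (SH k (conjW W P)) (dd v)) ->
  (\dim UP <= \dim UQ)%N.
Proof.
move=> uW hH hP hQ.
have [] := @dim_transfer R (VV) Hv UP UQ (fun v => ee (conjW W (dd v))) => //.
- apply/subvP => v /hP hv; apply/hH; apply: span_herm hv; exact: SH_herm.
- by move=> a u v _ _; rewrite dd_lin conjW_lin ee_lin.
- move=> u v _ _ /ee_inj h; apply: dd_inj.
  by rewrite -(conjWK W (dd u) uW) h conjWK.
- move=> v /hP hv; apply/hQ; rewrite ddK; exact: span_conj.
Qed.

Lemma dim_eq k P Q (UP UQ Hv : {vspace VV}) :
  rank_proj k P -> rank_proj k Q ->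
  (forall v, v \in Hv <-> herm (dd v)) ->
  (forall v, v \in UP <-> spanR (SH k P) (dd v)) ->
  (forall v, v \in UQ <-> spanR (SH k Q) (dd v)) ->
  \dim UP = \dim UQ.
Proof.
move=> rP rQ hH hP hQ; have [W [uW QE]] := proj_equiv _ _ _ rP rQ.
apply/eqP; rewrite eqn_leq; apply/andP; split.
  by apply: (dim_conj _ _ W _ _ _ uW hH hP); rewrite -QE.
apply: (dim_conj _ _ (adjmx W) _ _ _ (unitary_adj _ uW) hH hQ).
by rewrite QE conjWK.
Qed.

Section TT.
Variable (T : M -> M).
Hypothesis hT : herm_linear_bij T.

Lemma T0 : T 0 = 0.
Proof.
case: hT => _ [_ [Tsc _]].
have := Tsc 0 0 herm0; rewrite scaler0 => ->.
by rewrite (_ : rC 0 = 0) ?scale0r.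
Qed.

Lemma T_sum m (r : 'I_m -> R) (B : 'I_m -> M) : (forall i, herm (B i)) ->
  T (\sum_(i < m) rC (r i) *: B i) = \sum_(i < m) rC (r i) *: T (B i).
Proof.
case: hT => Th [Tadd [Tsc _]].
elim: m r B => [|m IH] r B hB; first by rewrite !big_ord0 T0.
have hS : forall m' (r' : 'I_m' -> R) B', (forall i, herm (B' i)) ->
    herm (\sum_(i < m') rC (r' i) *: B' i).
  move=> m' r' B' hB'; elim/big_ind: _ => //; [exact: herm0|exact: hermD|].
  by move=> i _; apply: hermZ.
rewrite !big_ord_recr /= Tadd ?Tsc ?IH //; [exact: hS | exact: hermZ].
Qed.

Lemma T_span k P Q : (forall B, SH k P B -> spanR (SH k Q) (T B)) ->
  forall A, spanR (SH k P) A -> spanR (SH k Q) (T A).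
Proof.
move=> hB A [m [r [F [SF ->]]]]; rewrite T_sum; last by move=> i; case: (SF i).
elim/big_ind: _; [exact: span0 | exact: spanD |].
by move=> i _; apply: spanZ; apply: hB.
Qed.

Lemma T_surj k P Q (UP UQ Hv : {vspace VV}) :
  (forall v, v \in Hv <-> herm (dd v)) ->
  (forall v, v \in UP <-> spanR (SH k P) (dd v)) ->
  (forall v, v \in UQ <-> spanR (SH k Q) (dd v)) ->
  \dim UP = \dim UQ ->
  (forall A, spanR (SH k P) A -> spanR (SH k Q) (T A)) ->
  forall A, spanR (SH k Q) A -> exists2 B, spanR (SH k P) B & T B = A.
Proof.
move=> hH hP hQ dPQ hTPQ A hA.
case: hT => Th [Tadd [Tsc [Tinj _]]].
have Hsub : (UP <= Hv)%VS.
  apply/subvP => v /hP hv; apply/hH; apply: span_herm hv; exact: SH_herm.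
have Hlin : forall a u v, u \in Hv -> v \in Hv ->
    ee (T (dd (a *: u + v))) = a *: ee (T (dd u)) + ee (T (dd v)).
  move=> a u v /hH hu /hH hv; by rewrite dd_lin Tadd ?Tsc ?ee_lin //; apply: hermZ.
have Hinj : forall u v, u \in Hv -> v \in Hv -> ee (T (dd u)) = ee (T (dd v)) -> u = v.
  by move=> u v /hH hu /hH hv /ee_inj /Tinj h; apply: dd_inj; apply: h.
have Hmap : forall x, x \in UP -> ee (T (dd x)) \in UQ.
  by move=> v /hP hv; apply/hQ; rewrite ddK; apply: hTPQ.
have [_ H2] := @dim_transfer R VV Hv UP UQ (fun v => ee (T (dd v))) Hsub Hlin Hinj Hmap.
have hAQ : ee A \in UQ by apply/hQ; rewrite ddK.
have [|x hx hxA] := H2 _ (ee A) hAQ; first by rewrite dPQ.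
move/hP: hx => hx; move/ee_inj: hxA => hxA.
by exists (dd x).
Qed.

End TT.

Lemma main_aux (k : nat) (T : M -> M) (P1 P2 : M) (t1 t2 : R) :
  herm_linear_bij T ->
  rank_proj k P1 -> rank_proj k P2 ->
  spanR (SH k P1) <> spanR (SH k P2) ->
  (t1 = 1 \/ t1 = -1) -> (t2 = 1 \/ t2 = -1) ->
  ~ (exists (Q : M) (t3 : R),
       rank_proj k Q /\ (t3 = 1 \/ t3 = -1) /\
       (T @` scaleset t1 (SH k P1)) `|` (T @` scaleset t2 (SH k P2))
         `<=` scaleset t3 (SH k Q)).
Proof.
move=> hT r1 r2 neq ht1 ht2 [Q [t3 [rQ [ht3 incl]]]].
have [Th [Tadd [Tsc [Tinj _]]]] := hT.
have sq : forall t : R, (t = 1 \/ t = -1) -> rC t * rC t = 1.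
  by move=> t [] ->; rewrite -rCM ?mulr1 ?mulrNN ?mulr1.
have inc : forall (P : M) (t : R), (t = 1 \/ t = -1) ->
    (forall B, (T @` scaleset t (SH k P)) B -> scaleset t3 (SH k Q) B) ->
    forall B, SH k P B -> spanR (SH k Q) (T B).
  move=> P t ht hinc B hB.
  have : scaleset t3 (SH k Q) (T (rC t *: B)).
    by apply: hinc; exists (rC t *: B) => //; exists B.
  case=> B' hB' eB.
  have -> : T B = rC t *: T (rC t *: B).
    by rewrite Tsc ?scalerA ?sq ?scale1r //; case: hB.
  by rewrite -eB; apply: spanZ; apply: spanZ; apply: spanS.
have i1 := T_span _ hT _ _ _ (inc P1 t1 ht1 (fun B h => incl B (or_introl h))).
have i2 := T_span _ hT _ _ _ (inc P2 t2 ht2 (fun B h => incl B (or_intror h))).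
have [Hv hH] := herm_vs.
have [U1 h1] := span_vs k P1.
have [U2 h2] := span_vs k P2.
have [UQ hQ] := span_vs k Q.
have d1 := dim_eq _ _ _ _ _ _ r1 rQ hH h1 hQ.
have d2 := dim_eq _ _ _ _ _ _ r2 rQ hH h2 hQ.
have s1 := T_surj _ hT _ _ _ _ _ _ hH h1 hQ d1 i1.
have s2 := T_surj _ hT _ _ _ _ _ _ hH h2 hQ d2 i2.
have hs : forall P, forall A, spanR (SH k P) A -> herm A.
  by move=> P A; apply: span_herm; apply: SH_herm.
apply: neq; apply/seteqP; split => A hA.
  have [B hB eB] := s2 _ (i1 _ hA).
  by rewrite -(Tinj _ _ (hs _ _ hB) (hs _ _ hA) eB).
have [B hB eB] := s1 _ (i2 _ hA).
by rewrite -(Tinj _ _ (hs _ _ hB) (hs _ _ hA) eB).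
Qed.

End Main.

Theorem mainTheorem11 (R : realType) (n k : nat) (T : 'M[R[i]]_n -> 'M[R[i]]_n)
    (P1 P2 : 'M[R[i]]_n) (t1 t2 : R) :
  (1 <= k)%N -> (k < n)%N ->
  herm_linear_bij T ->
  rank_proj k P1 -> rank_proj k P2 ->
  spanR (SH k P1) <> spanR (SH k P2) ->
  (t1 = 1 \/ t1 = -1) -> (t2 = 1 \/ t2 = -1) ->
  ~ (exists (Q : 'M[R[i]]_n) (t3 : R),
       rank_proj k Q /\ (t3 = 1 \/ t3 = -1) /\
       (T @` scaleset t1 (SH k P1)) `|` (T @` scaleset t2 (SH k P2))
         `<=` scaleset t3 (SH k Q)).
Proof. by move=> _ _; apply: main_aux. Qed.
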